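(* Let $(A,\circ,\cap)$ be a right normal band with intersection. For all $a,b\in A$, $a=a\circ b$ if and only if $a=a\cap b$.
   Context: A right normal band with intersection $(A,\circ,\cap)$: $(A,\circ)$ a semigroup with $x\circ x=x$ and $(x\circ y)\circ z=(y\circ x)\circ z$; $(A,\cap)$ a semilattice (associative, commutative, idempotent); $(x\cap y)\circ x=x\cap y$ and $x\circ(y\cap z)=(x\circ y)\cap z$ for all $x,y,z$. (The relation $a=a\circ b$ is the natural order $a\le b$.) *)

(* Defs.v *)
Definition right_normal_band_with_intersection (A : Type)
  (o : A -> A -> A) (cap : A -> A -> A) : Prop :=
  (forall x y z, o (o x y) z = o x (o y z)) /\
  (forall x, o x x = x) /\
  (forall x y z, o (o x y) z = o (o y x) z) /\
  (forall x y z, cap (cap x y) z = cap x (cap y z)) /\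
  (forall x y, cap x y = cap y x) /\
  (forall x, cap x x = x) /\
  (forall x y, o (cap x y) x = cap x y) /\
  (forall x y z, o x (cap y z) = cap (o x y) z).

(* Main.v *)
Require Import Defs.

Theorem proposition3p8 (A : Type) (o : A -> A -> A) (cap : A -> A -> A) :
  right_normal_band_with_intersection A o cap ->
  forall a b : A, a = o a b <-> a = cap a b.
Proof.
  intros (Ha & Hi & Hn & Ca & Cc & Ci & H1 & H2) a b; split; intro H.
  - assert (E : cap a b = cap (o a b) b) by (rewrite <- H; reflexivity).
    rewrite E, <- H2, Ci. exact H.
  - assert (E : o a b = o (cap a b) b) by (rewrite <- H; reflexivity).
    rewrite E, Cc, H1, Cc. exact H.
Qed.
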